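(* Let $M$ be a loopless matroid of rank $d+1$, and let $\{F_1,\dots,F_d\}$ and $\{G_1,\dots,G_d\}$ be multisets of flats of $M$ of rank at least $2$ such that both $t_{F_1}\cdots t_{F_d}$ and $t_{G_1}\cdots t_{G_d}$ lie in the support of $VP^\nabla_M$. If $G_d$ appears more times in $\{G_1,\dots,G_d\}$ than in $\{F_1,\dots,F_d\}$, then there exists a flat $F_m$ appearing more times in $\{F_1,\dots,F_d\}$ than in $\{G_1,\dots,G_d\}$ such that $t_{F_1}\cdots t_{F_d}t_{G_d}/t_{F_m}$ lies in the support of $VP^\nabla_M$.
   Context: $VP^\nabla_M(\underline t)=\sum_{(F_1,\dots,F_d)}t_{F_1}\cdots t_{F_d}$, the sum over ordered $d$-tuples of nonempty flats satisfying $\operatorname{rk}_M(\bigcup_{j\in J}F_j)\ge|J|+1$ for all nonempty $J\subseteq\{1,\dots,d\}$ (this is the volume polynomial $\int_M(\sum_F t_Fh_F)^d$ of the Chow ring of $M$ in its simplicial generators). Hence a monomial $t_{F_1}\cdots t_{F_d}$ lies in the support of $VP^\nabla_M$ if and only if the multiset $\{F_1,\dots,F_d\}$ satisfies this rank condition. *)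

(* Defs.v *)
From mathcomp Require Import all_boot.
Set Implicit Arguments. Unset Strict Implicit. Unset Printing Implicit Defensive.

Definition is_matroid_rank (T : finType) (rk : {set T} -> nat) : Prop :=
  [/\ forall A : {set T}, rk A <= #|A|,
      forall A B : {set T}, A \subset B -> rk A <= rk B &
      forall A B : {set T}, rk (A :|: B) + rk (A :&: B) <= rk A + rk B].

Definition loopless (T : finType) (rk : {set T} -> nat) : Prop :=
  forall x : T, rk [set x] = 1.

Definition is_flat (T : finType) (rk : {set T} -> nat) (F : {set T}) : Prop :=
  forall x : T, x \notin F -> rk F < rk (x |: F).

(* A multiset of flats {F_1,...,F_d}, listed as a sequence s, is in the support
   of VP^nabla_M (M of rank d+1) iff it has d elements, all nonempty flats,
   and rk(U_{j in J} F_j) >= |J| + 1 for every nonempty J. *)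
Definition in_VP_support (T : finType) (rk : {set T} -> nat) (d : nat)
    (s : seq {set T}) : Prop :=
  [/\ size s = d,
      forall F, F \in s -> is_flat rk F /\ F != set0 &
      forall J : {set 'I_(size s)}, J != set0 ->
        #|J| + 1 <= rk (\bigcup_(j in J) nth set0 s j)].

(* Main.v *)
Require Import Defs.
From mathcomp Require Import all_boot.
From mathcomp Require Import zify.
Set Implicit Arguments. Unset Strict Implicit. Unset Printing Implicit Defensive.
Lemma count_card (A : eqType) (x0 : A) (s : seq A) (P : pred A) :
  count P s = #|[set j : 'I_(size s) | P (nth x0 s j)]|.
Proof.
rewrite -sum1_count cardsE -sum1_card.
rewrite -{1}(mkseq_nth x0 s) /mkseq -val_enum_ord -map_comp big_map.
by rewrite big_enum_cond /=; apply: eq_bigl => j.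
Qed.

Lemma count_map_enum (I : finType) (A : eqType) (f : I -> A) (B : {set I}) (P : pred A) :
  count P (map f (enum B)) = #|[set j in B | P (f j)]|.
Proof.
rewrite -sum1_count big_map big_enum_cond cardsE -sum1_card.
by apply: eq_bigl => j.
Qed.

Lemma matching (X : finType) (G u : seq {set X}) :
  (forall Y, count_mem Y u <= count_mem Y G) ->
  exists K : {set 'I_(size G)}, [/\ #|K| = size u,
    \bigcup_(k in K) nth set0 G k = \bigcup_(Y <- u) Y &
    forall Y, #|[set k in K | nth set0 G k == Y]| = count_mem Y u].
Proof.
elim: u => [|x u IH] hc.
  exists set0; split; first by rewrite cards0.
    by rewrite big_set0 big_nil.
  by move=> Y; apply/eqP; rewrite cards_eq0; apply/eqP/setP => j; rewrite !inE.
have [K [cK uK nK]] : exists K : {set 'I_(size G)}, [/\ #|K| = size u,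
    \bigcup_(k in K) nth set0 G k = \bigcup_(Y <- u) Y &
    forall Y, #|[set k in K | nth set0 G k == Y]| = count_mem Y u].
  apply: IH => Y; apply: leq_trans (hc Y); rewrite /= leq_addl //.
have : ~~ ([set k : 'I_(size G) | nth set0 G k == x] \subset [set k in K | nth set0 G k == x]).
  apply/negP => /subset_leq_card; rewrite nK -(count_card set0 G (pred1 x)).
  apply/negP; rewrite -ltnNge; apply: leq_trans (hc x); by rewrite /= eqxx.
case/subsetPn => k; rewrite !inE => /eqP kx; rewrite kx eqxx andbT => kK.
exists (k |: K); split.
- by rewrite cardsU1 kK cK.
- by rewrite big_setU1 //= big_cons uK kx.
- move=> Y; rewrite (cardsD1 k) !inE eqxx /= kx /=; congr (_ + _).
  rewrite -nK; apply: eq_card => j; rewrite !inE.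
  by case: (eqVneq j k) => [->|] //=; rewrite (negbTE kK).
Qed.

Lemma nth_rem_bump (A : eqType) (x0 x : A) s k : x \in s ->
  nth x0 (rem x s) k = nth x0 s (bump (index x s) k).
Proof.
elim: s k => [|y s IH] k //=.
case: (eqVneq y x) => [->|nyx].
  by move=> _; rewrite /bump leq0n add1n.
rewrite inE eq_sym (negbTE nyx) /= => xs.
case: k => [|k] //=.
by rewrite IH // /bump ltnS addnS.
Qed.

Theorem proposition5p15 (T : finType) (rk : {set T} -> nat) (d : nat)
  (F G : seq {set T}) :
  is_matroid_rank rk -> loopless rk -> rk [set: T] = d.+1 ->
  (forall H, H \in F -> is_flat rk H /\ 2 <= rk H) ->
  (forall H, H \in G -> is_flat rk H /\ 2 <= rk H) ->
  in_VP_support rk d F -> in_VP_support rk d G ->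
  count_mem (nth set0 G d.-1) F < count_mem (nth set0 G d.-1) G ->
  exists2 Fm, Fm \in F &
    count_mem Fm G < count_mem Fm F /\
    in_VP_support rk d (nth set0 G d.-1 :: rem Fm F).
Proof.
move=> [rk_le rk_mono rk_sub] _ rkT hFf hGf [sF fF hallF] [sG fG hallG] hcnt.
have d_gt0 : 0 < d.
  rewrite -sG; apply: leq_trans (count_size _ G); exact: leq_ltn_trans hcnt.
have HG : nth set0 G d.-1 \in G by rewrite mem_nth // sG prednK.
move: hcnt HG; set H := nth set0 G d.-1 => hcnt HG.
have [_ rkH] := hGf H HG.
subst d.
pose g := fun J : {set 'I_(size F).+1} => rk (\bigcup_(j in J) nth set0 (H :: F) j).
have gmono : forall J K : {set 'I_(size F).+1}, J \subset K -> g J <= g K.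
  move=> J K JK; apply: rk_mono; apply/bigcupsP => j jJ.
  exact: (bigcup_sup j (subsetP JK j jJ)).
have factA : forall J : {set 'I_(size F).+1}, ord0 \notin J -> J != set0 -> #|J| + 1 <= g J.
  move=> J J0 Jne.
  pose J' := [set j : 'I_(size F) | lift ord0 j \in J].
  have eJ : J = lift ord0 @: J'.
    apply/setP => i; apply/idP/imsetP.
      case: (unliftP ord0 i) => [j ->|->] iJ; last by rewrite iJ in J0.
      by exists j; rewrite // inE.
    by case=> j; rewrite inE => jJ ->.
  have cJ : #|J| = #|J'| by rewrite eJ card_imset //; exact: lift_inj.
  have gJ : g J = rk (\bigcup_(j in J') nth set0 F j).
    rewrite /g eJ big_imset /=; last by move=> a b _ _; exact: lift_inj.
    by apply: congr1; apply: eq_bigr => j _.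
  rewrite cJ gJ; apply: hallF.
  by rewrite -card_gt0 -cJ card_gt0.
have factB : forall J : {set 'I_(size F).+1}, ord0 \in J -> #|J| <= g J.
  move=> J J0; rewrite (cardsD1 ord0) J0.
  case: (eqVneq (J :\ ord0) set0) => [->|ne].
    rewrite cards0 addn0; apply: leq_trans (ltnW rkH) _.
    have := gmono [set ord0] J; rewrite sub1set J0 => /(_ isT).
    by rewrite /g big_set1.
  rewrite add1n -addn1; apply: leq_trans (factA _ _ ne) _.
    by rewrite !inE eqxx.
  by apply: gmono; exact: subsetDl.
pose tight := fun J : {set 'I_(size F).+1} => (ord0 \in J) && (g J <= #|J|).
have tightI : forall J K : {set 'I_(size F).+1}, tight J -> tight K -> tight (J :&: K).
  move=> J K /andP[J0 gJ] /andP[K0 gK].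
  have IK0 : ord0 \in J :&: K by rewrite inE J0 K0.
  rewrite /tight IK0 /=.
  have hU : g (J :|: K) = rk ((\bigcup_(j in J) nth set0 (H :: F) j) :|:
                              (\bigcup_(j in K) nth set0 (H :: F) j)).
    by rewrite /g bigcup_setU.
  have hI : g (J :&: K) <= rk ((\bigcup_(j in J) nth set0 (H :: F) j) :&:
                              (\bigcup_(j in K) nth set0 (H :: F) j)).
    apply: rk_mono; apply/bigcupsP => j; rewrite inE => /andP[jJ jK].
    by rewrite subsetI !(bigcup_sup j).
  have hsub := rk_sub (\bigcup_(j in J) nth set0 (H :: F) j)
                      (\bigcup_(j in K) nth set0 (H :: F) j).
  have hBU : #|J :|: K| <= g (J :|: K) by apply: factB; rewrite inE J0.
  have hc := cardsUI J K.
  rewrite -(leq_add2l #|J :|: K|) hc.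
  apply: leq_trans (leq_add gJ gK).
  apply: leq_trans hsub.
  by apply: leq_add => //; rewrite -hU.
have tightT : tight setT.
  rewrite /tight inE /= cardsT card_ord; apply: leq_trans (rk_mono _ _ (subsetT _)) _.
  by rewrite rkT.
case: (arg_minnP (fun J : {set 'I_(size F).+1} => #|J|) tightT) => J0 tJ0 minJ0.
move: (tJ0) => /andP[J00 gJ0].
have [m [mJ0 m0 hm]] : exists m, [/\ m \in J0, m != ord0 &
    count_mem (nth set0 (H :: F) m) G < count_mem (nth set0 (H :: F) m) F].
  case: (boolP [exists m in J0, (m != ord0) &&
      (count_mem (nth set0 (H :: F) m) G < count_mem (nth set0 (H :: F) m) F)]).
    by case/exists_inP => m mJ0 /andP[m0 hm]; exists m.
  rewrite negb_exists_in => /forall_inP hno; exfalso.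
  pose u := [seq nth set0 (H :: F) (nat_of_ord j) | j <- enum J0].
  have hc : forall Y, count_mem Y u <= count_mem Y G.
    move=> Y; rewrite /u count_map_enum.
    case: (posnP #|[set j in J0 | nth set0 (H :: F) j == Y]|) => [->//|pos].
    case/card_gt0P: pos => j; rewrite inE => /andP[jJ0 /eqP jY].
    have le1 : #|[set j in J0 | nth set0 (H :: F) j == Y]| <= count_mem Y (H :: F).
      rewrite (count_card set0 (H :: F) (pred1 Y)); apply: subset_leq_card.
      by apply/subsetP => i; rewrite !inE => /andP[_ ->].
    apply: leq_trans le1 _; rewrite /=.
    case: (eqVneq H Y) => [<-|HnY] /=; first by rewrite add1n.
    have j0 : j != ord0 by apply: contraNneq HnY => e; rewrite -jY e.
    have := hno j jJ0; rewrite j0 /= -leqNgt jY add0n; exact.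
  have [K [cK uK _]] := matching hc.
  have cKJ : #|K| = #|J0| by rewrite cK size_map -cardE.
  have := hallG K; rewrite -card_gt0 cKJ card_gt0.
  have -> : \bigcup_(j in K) nth set0 G j = \bigcup_(j in J0) nth set0 (H :: F) j.
    by rewrite uK /u big_map big_enum.
  have ne : J0 != set0 by apply/set0Pn; exists ord0.
  move=> /(_ ne); apply/negP; rewrite -ltnNge addn1 ltnS; exact: gJ0.
have claimD : forall K : {set 'I_(size F).+1}, K != set0 -> m \notin K -> #|K| + 1 <= g K.
  move=> K Kne mK; case: (boolP (ord0 \in K)) => K0; last exact: factA.
  rewrite leqNgt; apply/negP; rewrite addn1 ltnS => gK.
  have tK : tight K by rewrite /tight K0 gK.
  have := minJ0 _ (tightI _ _ tJ0 tK); apply/negP; rewrite -ltnNge.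
  apply: proper_card; apply: properIl; apply/subsetPn; by exists m.
have [m' em] : exists m' : 'I_(size F), m = lift ord0 m'.
  case: (unliftP ord0 m) => [j ->|e]; first by exists j.
  by rewrite e eqxx in m0.
pose Fm := nth set0 (H :: F) m.
have eFm : Fm = nth set0 F m' by rewrite /Fm em.
have FmF : Fm \in F by rewrite eFm mem_nth.
exists Fm => //; split; first exact: hm.
split.
- by rewrite /= size_rem // prednK.
- move=> X; rewrite inE => /orP[/eqP -> | /mem_rem XF]; [exact: fG | exact: fF].
move=> J Jne.
set i := index Fm F.
have iF : i < size F by rewrite index_mem.
have iF' : i.+1 < (size F).+1 by [].
pose p : 'I_(size F).+1 := @Ordinal _ i.+1 iF'.
have ep : nth set0 (H :: F) p = Fm by rewrite /= nth_index.
have nt : forall k, nth set0 (H :: rem Fm F) k = nth set0 (H :: F) (bump i.+1 k).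
  by case=> [|k] //=; rewrite nth_rem_bump // /bump ltnS addnS.
pose f := fun k : 'I_(size (H :: rem Fm F)) => (inord (bump i.+1 k) : 'I_(size F).+1).
have fE : forall k, nat_of_ord (f k) = bump i.+1 k.
  move=> k; rewrite inordK //.
  have e : size (H :: rem Fm F) = size F by rewrite /= size_rem // prednK.
  have kl : (k : nat) < size F by apply: leq_trans (ltn_ord k) _; rewrite e.
  rewrite ltnS /bump; apply: leq_trans (leq_add (leq_b1 _) (leqnn _)) _.
  by rewrite add1n.
have finj : injective f.
  move=> a b /(congr1 val); rewrite /= !fE => /(can_inj (bumpK _)) ab.
  exact: val_inj.
have pJ' : p \notin f @: J.
  apply/imsetP => [[k _ /(congr1 val)]]; rewrite /= fE => e.
  by move: (neq_bump i.+1 k); rewrite -e eqxx.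
have cJ : #|f @: J| = #|J| by rewrite card_imset.
have gJ : g (f @: J) = rk (\bigcup_(j in J) nth set0 (H :: rem Fm F) j).
  rewrite /g big_imset /=; last by move=> a b _ _; exact: finj.
  by apply: congr1; apply: eq_bigr => k _; rewrite nt fE.
rewrite -cJ -gJ.
have Jne' : f @: J != set0 by rewrite -card_gt0 cJ card_gt0.
move: Jne' pJ'; set J' := f @: J => Jne' pJ'.
case: (boolP (m \in J')) => mJ'; last exact: claimD.
have mp : m != p by apply: contraNneq pJ' => <-.
pose J'' := p |: (J' :\ m).
have pn : p \notin J' :\ m by rewrite inE negb_and pJ' orbT.
have c'' : #|J''| = #|J'| by rewrite cardsU1 pn (cardsD1 m J') mJ'.
have g'' : g J'' = g J'.
  by rewrite /g /J'' big_setU1 //= (big_setD1 m mJ') /= nth_index.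
rewrite -c'' -g''; apply: claimD.
  by apply/set0Pn; exists p; rewrite setU11.
by rewrite !inE eqxx (negbTE mp).
Qed.
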